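(* Let $T\ge 1$ and $n_w\ge 0$ be integers, let $C>0$, and let $q_1,\dots,q_T\in\mathbb{R}$. For $\mathbf{u}=(u_1,\dots,u_T)\in\mathbb{R}^T$ and $i=1,\dots,T$ write $\mathbf{u}_i=(u_{i-n_w},\dots,u_i)$, where entries with index $\le 0$ are fixed constants (not decision variables). Let $J_i:\mathbb{R}\to\mathbb{R}$ ($i=1,\dots,T$) be continuously differentiable and increasing, and let $f_i:\mathbb{R}^{n_w+1}\to\mathbb{R}$ ($i=1,\dots,T$) be continuously differentiable and non-decreasing in each of their arguments. Define the penalty function $$\hat J(\mathbf{u})=\sum_{i=1}^T\Big(J_i(u_i)+C\big(f_i(\mathbf{u}_i)-q_i\big)^2\Big)$$ on $\mathbb{R}^T$. Then at any (unconstrained, local) minimum $\mathbf{u}^*$ of $\hat J$, at least one of the inequality constraints $f_i(\mathbf{u}^*_i)-q_i\ge 0$, $i=1,\dots,T$, is violated.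
   Context: ''Increasing'' for a differentiable function means its derivative is strictly positive; ''non-decreasing'' means all its partial derivatives are non-negative. The penalty function arises from the constrained problem $\min J(\mathbf{u})=\sum_i J_i(u_i)$ subject to $f_i(\mathbf{u}_i)\ge q_i$, $i=1,\dots,T$. *)

(* Defs.v *)
From HB Require Import structures.
From mathcomp Require Import all_boot all_order all_algebra.
From mathcomp Require Import all_classical all_reals all_analysis.
Set Implicit Arguments. Unset Strict Implicit. Unset Printing Implicit Defensive.
Import Order.TTheory GRing.Theory Num.Theory.
Import numFieldNormedType.Exports.
Local Open Scope ring_scope.

Definition rowget (R : realType) (T : nat) (u : 'rV[R]_T) (m : nat) : R :=
  match @insub nat (fun m => (m < T)%N) 'I_T m with
  | Some j => u ord0 j
  | None => 0
  end.

(* Extended sequence, shifted by n_w: position s < n_w holds the fixed constant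
   c s (= u_{s - n_w + 1}, an index <= 0); position s >= n_w holds the decision
   variable u_{s - n_w + 1}, i.e. the (s - n_w)-th (0-based) entry of u. *)
Definition ext (R : realType) (T nw : nat) (c : nat -> R) (u : 'rV[R]_T) (s : nat) : R :=
  if (s < nw)%N then c s else rowget u (s - nw).

(* For the 0-based index i (paper index i+1): u_{i+1} = (u_{i+1-nw}, ..., u_{i+1}). *)
Definition window (R : realType) (T nw : nat) (c : nat -> R) (u : 'rV[R]_T) (i : 'I_T)
  : 'rV[R]_nw.+1 := \row_(k < nw.+1) ext nw c u (i + k).

Definition partial (R : realType) (m : nat) (j : 'I_m) (g : 'rV[R]_m -> R) (x : 'rV[R]_m) : R :=
  'D_(delta_mx ord0 j) g x.

Definition C1_scalar (R : realType) (g : R -> R) : Prop :=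
  (forall x, derivable g x 1) /\ continuous (derive1 g).

Definition C1_vec (R : realType) (m : nat) (g : 'rV[R]_m -> R) : Prop :=
  (forall x, differentiable g x) /\ (forall j : 'I_m, continuous (partial j g)).

Definition Jhat (R : realType) (T nw : nat) (c : nat -> R) (J : 'I_T -> R -> R)
  (f : 'I_T -> 'rV[R]_nw.+1 -> R) (q : 'I_T -> R) (C : R) (u : 'rV[R]_T) : R :=
  \sum_(i < T) (J i (u ord0 i) + C * (f i (window nw c u i) - q i) ^+ 2).

(* Main.v *)
Require Import Defs.
From HB Require Import structures.
From mathcomp Require Import all_boot all_order all_algebra.
From mathcomp Require Import all_classical all_reals all_analysis.
From mathcomp Require Import zify.
Import Order.TTheory GRing.Theory Num.Theory.
Import numFieldNormedType.Exports.
Local Open Scope ring_scope.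

Lemma rowget_line (R : realType) (T : nat) (L : 'I_T) (u : 'rV[R]_T) (t : R) (m : nat) :
  rowget (u + t *: delta_mx ord0 L) m = rowget u m + t * (m == L)%:R.
Proof.
rewrite /rowget; case: insubP => [j jT jm|].
  by rewrite !mxE eqxx /= -jm (inj_eq val_inj) eq_sym.
move=> H; rewrite add0r; case: eqP => [mL|]; last by rewrite mulr0.
by move: H; rewrite mL ltn_ord.
Qed.

Lemma window_line (R : realType) (T nw : nat) (c : nat -> R) (L : 'I_T) (u : 'rV[R]_T)
  (t : R) (i : 'I_T) : (L.+1 = T)%N ->
  window nw c (u + t *: delta_mx ord0 L) i =
  window nw c u i + (t * (i == L)%:R) *: delta_mx ord0 ord_max.
Proof.
move=> LT; apply/rowP => k; rewrite !mxE /ext eqxx /=.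
have iT := ltn_ord i; have kn := ltn_ord k.
case: ifP => H.
  have -> : (k == ord_max) = false by apply/eqP => E; rewrite E /= in H; lia.
  by rewrite mulr0 addr0.
rewrite rowget_line -mulrA -natrM mulnb; congr (_ + t * (nat_of_bool _)%:R).
apply/idP/andP => [/eqP E|[/eqP E1 /eqP E2]].
  split; apply/eqP/val_inj => /=; move: H; lia.
by rewrite E1 E2 /= addnK.
Qed.
Lemma line_derivable (R : realType) (V : normedModType R) (F : V -> R) (x v : V) (t : R) :
  derivable F (t *: v + x) v ->
  is_derive t 1 (fun s => F (s *: v + x)) ('D_v F (t *: v + x)).
Proof.
move=> dF.
have E : (fun h : R => h^-1 *: (((fun s => F (s *: v + x)) \o shift t) (h *: 1) - F (t *: v + x)))
   = (fun h : R => h^-1 *: ((F \o shift (t *: v + x)) (h *: v) - F (t *: v + x))).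
  apply/funext => h /=; congr (_ *: (F _ - _)).
  by rewrite [h *: 1]mulr1 scalerDl addrA.
apply: DeriveDef.
  by rewrite /derivable E.
by rewrite /derive E.
Qed.

Theorem proposition2 (R : realType) (T nw : nat) (C : R) (q : 'I_T -> R)
  (c : nat -> R) (J : 'I_T -> R -> R) (f : 'I_T -> 'rV[R]_nw.+1 -> R)
  (ustar : 'rV[R]_T) :
  (0 < T)%N -> 0 < C ->
  (forall i, C1_scalar (J i)) ->
  (forall i x, 0 < derive1 (J i) x) ->
  (forall i, C1_vec (f i)) ->
  (forall i x (j : 'I_nw.+1), 0 <= partial j (f i) x) ->
  (\forall v \near ustar, Jhat c J f q C ustar <= Jhat c J f q C v) ->
  exists i : 'I_T, f i (window nw c ustar i) - q i < 0.
Proof.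
move=> T0 C0 J1 Jpos f1 fpos Hmin.
apply: contrapT => Hn.
have Hge i : 0 <= f i (window nw c ustar i) - q i.
  by rewrite leNgt; apply/negP => H; apply: Hn; exists i.
have LT : T.-1.+1 = T by rewrite prednK.
have LT' : (T.-1 < T)%N by rewrite LT.
pose L : 'I_T := Ordinal LT'.
pose e : 'rV[R]_T := delta_mx ord0 L.
pose d : 'rV[R]_nw.+1 := delta_mx ord0 ord_max.
pose a := ustar ord0 L.
pose w := window nw c ustar L.
pose psi := (fun s : R => J L (s *: 1 + a)) +
   C \*: ((fun s : R => f L (s *: d + w)) - cst (q L)) ^+ 2.
pose K := \sum_(i < T | i != L) (J i (ustar ord0 i) + C * (f i (window nw c ustar i) - q i) ^+ 2).
have EJ t : Jhat c J f q C (ustar + t *: e) = K + psi t.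
  rewrite /Jhat (bigD1 L) //= addrC; congr (_ + _).
    apply: eq_bigr => i iL.
    rewrite window_line // !mxE eqxx /=; move: iL; case: eqP => // _ _.
    by rewrite !mulr0 scale0r !addr0.
  rewrite window_line // !mxE !eqxx /= !mulr1 /psi !fctE /=.
  congr (J L _ + _); first by rewrite /a [t%:A]mulr1 addrC.
  by rewrite /w /d [_ + t *: _]addrC.
have Hnear : \forall t \near (0:R), Jhat c J f q C ustar <= Jhat c J f q C (ustar + t *: e).
  have cont : ((fun t : R => ustar + t *: e) @ (0:R) --> ustar + 0 *: e)%classic.
    apply: cvgD; first exact: cvg_cst.
    exact: scalel_continuous.
  rewrite scale0r addr0 in cont.
  exact: cont Hmin.
move/nbhs_ballP: Hnear => [r r0 Hr].
have dJ t : derivable (J L) (t *: 1 + a) 1 by case: (J1 L) => + _; apply.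
have dF t : derivable (f L) (t *: d + w) d.
  by apply: diff_derivable; case: (f1 L) => + _; apply.
have dpsi t := is_deriveD (@line_derivable _ _ _ _ _ _ (dJ t))
  (is_deriveZ C (is_deriveX 2 (is_deriveB (@line_derivable _ _ _ _ _ _ (dF t))
     (is_derive_cst (q L) t 1)))).
have E0 := EJ 0; rewrite scale0r addr0 in E0.
have dz : is_derive (0:R) 1 psi 0.
  apply: (@derive1_at_min _ psi (- r) r 0).
  - by rewrite lerNl; apply: le_trans (ltW r0); rewrite oppr_le0 ltW.
  - by move=> t _; apply: ex_derive; apply: dpsi.
  - by rewrite in_itv /= oppr_lt0 r0.
  - move=> t tr; have := Hr t.
    rewrite E0 EJ lerD2l; apply.
    rewrite /ball /= sub0r normrN ltr_norml.
    by move: tr; rewrite in_itv /= => /andP[-> ->].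
have H2 := @derive_val _ _ _ _ _ _ _ (dpsi 0).
rewrite (@derive_val _ _ _ _ _ _ _ dz) in H2.
move: H2; rewrite !fctE /= scale0r !add0r -derive1E.
rewrite scale0r add0r subr0 expr1.
have h1 := Jpos L a.
have h2 : 0 <= C *: ((2 * (f L w - q L)) *: 'D_d (f L) w).
  apply: mulr_ge0; first exact: ltW.
  apply: mulr_ge0; first by apply: mulr_ge0 => //; exact: Hge.
  exact: fpos.
move: h1 h2; set A := (J L)^`()%classic a; set B := C *: _.
move=> h1 h2 h3; have : 0 < A + B by apply: ltr_wpDr.
by rewrite -h3 ltxx.
Qed.
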